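(* Let $a\in\mathbb{R}$, $b\in(a,\infty)$, $h\in\mathbb{N}$, $v_1,\dots,v_h,w_1,\dots,w_h\in(0,\infty)$, let $f,p\in C(\mathbb{R},\mathbb{R})$ satisfy for all $x\in\mathbb{R}$ that $p(x)\ge0$ and $p^{-1}((0,\infty))=(a,b)$, with $\mathcal{N}^\theta$, $\mathcal{L}$, $I_i^\theta$, $\operatorname{Lip}$ as in the context. Assume that $f$ is non-decreasing and satisfies $\operatorname{Lip}(f)<\min_{i\in\{1,\dots,h\}}v_iw_i$, let $\vartheta\in\mathbb{R}^{h+1}$ satisfy $(\nabla\mathcal{L})(\vartheta)=0$, and let $V=\sup_{x\in(a,b)}\sum_{i\in\{1,\dots,h\},\,x\in I_i^\vartheta}v_i$. Then $$\max\{\mathcal{N}^\vartheta(b)-f(b),\,f(a)-\mathcal{N}^\vartheta(a)\}\le V.$$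
   Context: Let $\mathfrak{c}(x)=\min\{\max\{x,0\},1\}$. For $F\in C(\mathbb{R},\mathbb{R})$ let $\operatorname{Lip}(F)=\sup_{x,y\in[a,b],x\ne y}\frac{|F(x)-F(y)|}{|x-y|}$. For $\theta=(\theta_1,\dots,\theta_{h+1})\in\mathbb{R}^{h+1}$ and $i\in\{1,\dots,h\}$ let $\psi_i(\theta)=-[w_i]^{-1}\theta_i$, $I_i^\theta=(\psi_i(\theta),\psi_i(\theta)+[w_i]^{-1})\cap(a,b)$, $\mathcal{N}^\theta(x)=\theta_{h+1}+\sum_{i=1}^hv_i\mathfrak{c}(w_ix+\theta_i)$, and $\mathcal{L}(\theta)=\int_a^b(\mathcal{N}^\theta(x)-f(x))^2p(x)\,\mathrm{d}x$ ($\mathcal{L}$ is continuously differentiable). *)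

(* Defs.v *)
From Stdlib Require Import Reals Lra.
From Coquelicot Require Import Coquelicot.
Open Scope R_scope.

Definition clip (x : R) : R := Rmin (Rmax x 0) 1.

Fixpoint sum1 (h : nat) (g : nat -> R) : R :=
  match h with
  | O => 0
  | S k => sum1 k g + g (S k)
  end.

(* Parameter vectors theta in R^{h+1} are functions nat -> R, with the
   relevant coordinates theta 1, ..., theta (h+1). *)

Definition realization (h : nat) (v w : nat -> R) (theta : nat -> R) (x : R) : R :=
  theta (S h) + sum1 h (fun i => v i * clip (w i * x + theta i)).

(* L(theta) = int_a^b (N^theta(x) - f(x))^2 p(x) dx  (Riemann integral;
   the integrand is continuous) *)
Definition risk (a b : R) (h : nat) (v w : nat -> R) (f p : R -> R)
  (theta : nat -> R) : R :=
  RInt (fun x => (realization h v w theta x - f x) ^ 2 * p x) a b.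

Definition upd (theta : nat -> R) (j : nat) (t : R) : nat -> R :=
  fun k => if Nat.eqb k j then t else theta k.

Definition psi (w : nat -> R) (theta : nat -> R) (i : nat) : R :=
  - (/ w i) * theta i.

(* x in I_i^theta = (psi_i, psi_i + 1/w_i) cap (a,b); membership is decided
   inline in active_sum below. *)

Definition active_sum (a b : R) (h : nat) (v w : nat -> R) (theta : nat -> R)
  (x : R) : R :=
  sum1 h (fun i =>
    match Rlt_dec (psi w theta i) x, Rlt_dec x (psi w theta i + / w i),
          Rlt_dec a x, Rlt_dec x b with
    | left _, left _, left _, left _ => v i
    | _, _, _, _ => 0
    end).

Definition Vsup (a b : R) (h : nat) (v w : nat -> R) (theta : nat -> R) : Rbar :=
  Lub_Rbar (fun y => exists x, a < x < b /\ y = active_sum a b h v w theta x).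

(* Main.v *)
Require Import Defs.
From Stdlib Require Import Reals Lra Psatz Classical.
From Coquelicot Require Import Coquelicot.
Open Scope R_scope.

Lemma clip_0 x : x <= 0 -> clip x = 0.
Proof. unfold clip, Rmin, Rmax; intros; repeat destruct Rle_dec; lra. Qed.
Lemma clip_1 x : 1 <= x -> clip x = 1.
Proof. unfold clip, Rmin, Rmax; intros; repeat destruct Rle_dec; lra. Qed.
Lemma clip_id x : 0 <= x <= 1 -> clip x = x.
Proof. unfold clip, Rmin, Rmax; intros; repeat destruct Rle_dec; lra. Qed.
Lemma clip_range x : 0 <= clip x <= 1.
Proof. unfold clip, Rmin, Rmax; repeat destruct Rle_dec; lra. Qed.
Lemma clip_mono x y : x <= y -> clip x <= clip y.
Proof. unfold clip, Rmin, Rmax; intros; repeat destruct Rle_dec; lra. Qed.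
Lemma clip_lip x y : Rabs (clip x - clip y) <= Rabs (x - y).
Proof. unfold clip, Rmin, Rmax; unfold Rabs; repeat destruct Rle_dec; repeat destruct Rcase_abs; lra. Qed.

Lemma clip_diff sg u s : (sg = 1 \/ sg = -1) -> 0 < s ->
  0 <= sg * (clip (u + sg * s) - clip u) <= s /\
  (sg * (clip (u + sg * s) - clip u) <> 0 ->
     (sg = 1 -> - s < u < 1) /\ (sg = -1 -> 0 < u < 1 + s)).
Proof.
  intros [-> | ->] Hs; unfold clip, Rmin, Rmax; repeat destruct Rle_dec;
  repeat split; intros; lra.
Qed.

Lemma cp_plus F G x : continuity_pt F x -> continuity_pt G x -> continuity_pt (fun y => F y + G y) x.
Proof. intros; exact (continuity_pt_plus F G x H H0). Qed.
Lemma cp_minus F G x : continuity_pt F x -> continuity_pt G x -> continuity_pt (fun y => F y - G y) x.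
Proof. intros; exact (continuity_pt_minus F G x H H0). Qed.
Lemma cp_mult F G x : continuity_pt F x -> continuity_pt G x -> continuity_pt (fun y => F y * G y) x.
Proof. intros; exact (continuity_pt_mult F G x H H0). Qed.
Lemma cp_const (c : R) x : continuity_pt (fun _ => c) x.
Proof. apply continuity_pt_const; intros ? ?; reflexivity. Qed.
Lemma cp_id x : continuity_pt (fun y => y) x.
Proof. apply continuity_pt_id. Qed.
Lemma cp_sq F x : continuity_pt F x -> continuity_pt (fun y => F y ^ 2) x.
Proof. intros H. apply continuity_pt_ext with (fun y => F y * F y).
  intros; ring. now apply cp_mult. Qed.
Lemma cp_clip0 x : continuity_pt clip x.
Proof.
  intros eps Heps. exists eps; split; auto. intros y [_ Hy]. simpl in *. unfold R_dist in *.
  eapply Rle_lt_trans; [apply clip_lip|]; auto.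
Qed.
Lemma cp_clip F x : continuity_pt F x -> continuity_pt (fun y => clip (F y)) x.
Proof. intros H. exact (continuity_pt_comp F clip x H (cp_clip0 (F x))). Qed.

Lemma cont_eps F x0 eps : continuity_pt F x0 -> 0 < eps ->
  exists d, 0 < d /\ forall x, Rabs (x - x0) < d -> Rabs (F x - F x0) < eps.
Proof.
  intros H He. destruct (H eps He) as [d [Hd H']]. exists d; split; auto.
  intros x Hx. destruct (Req_dec x x0) as [->|Hne].
  - rewrite Rminus_eq_0, Rabs_R0; auto.
  - apply (H' x). split; [split; auto|]. unfold no_cond; auto. simpl; unfold R_dist; auto.
Qed.

Lemma cp_to_c F x : continuity_pt F x -> continuous F x.
Proof. intros H. now apply continuity_pt_filterlim. Qed.
Lemma c_to_cp F x : continuous F x -> continuity_pt F x.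
Proof. intros H. now apply continuity_pt_filterlim. Qed.

Lemma sum1_ext h g1 g2 : (forall i, (1 <= i <= h)%nat -> g1 i = g2 i) -> sum1 h g1 = sum1 h g2.
Proof. induction h; simpl; intros H; auto. rewrite IHh; [rewrite H; auto; lia|]. intros; apply H; lia. Qed.
Lemma sum1_le h g1 g2 : (forall i, (1 <= i <= h)%nat -> g1 i <= g2 i) -> sum1 h g1 <= sum1 h g2.
Proof. induction h; simpl; intros H; [lra|]. assert (g1 (S h) <= g2 (S h)) by (apply H; lia).
  assert (sum1 h g1 <= sum1 h g2) by (apply IHh; intros; apply H; lia). lra. Qed.
Lemma sum1_minus h g1 g2 : sum1 h (fun i => g1 i - g2 i) = sum1 h g1 - sum1 h g2.
Proof. induction h; simpl; [ring|]. rewrite IHh; ring. Qed.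
Lemma sum1_cont h (F : nat -> R -> R) x : (forall i, continuity_pt (F i) x) ->
  continuity_pt (fun y => sum1 h (fun i => F i y)) x.
Proof. intros H; induction h; simpl. apply cp_const. apply cp_plus; auto. Qed.

Lemma sum1_upd h (F : nat -> R -> R) th i t : (1 <= i <= h)%nat ->
  sum1 h (fun k => F k (upd th i t k)) = sum1 h (fun k => F k (th k)) + (F i t - F i (th i)).
Proof.
  induction h; intros Hi; [lia|]. simpl.
  destruct (Nat.eq_dec i (S h)) as [->|Hne].
  - unfold upd at 2. rewrite Nat.eqb_refl.
    rewrite (sum1_ext h (fun k => F k (upd th (S h) t k)) (fun k => F k (th k))). ring.
    intros k Hk. unfold upd. replace (Nat.eqb k (S h)) with false; auto.
    symmetry; apply Nat.eqb_neq; lia.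
  - rewrite IHh by lia. unfold upd at 1. replace (Nat.eqb (S h) i) with false. ring.
    symmetry; apply Nat.eqb_neq; lia.
Qed.

Lemma real_cont h v w th x : continuity_pt (realization h v w th) x.
Proof.
  unfold realization. apply cp_plus. apply cp_const.
  apply (sum1_cont h (fun i y => v i * clip (w i * y + th i))). intros i.
  apply cp_mult. apply cp_const. apply cp_clip. apply cp_plus; [apply cp_mult; [apply cp_const|apply cp_id]|apply cp_const].
Qed.

Ltac cont := repeat (first [ assumption | (match goal with H : forall _ : R, continuity_pt ?F _ |- continuity_pt ?F _ => apply H end) | apply real_cont | apply cp_const | apply cp_id | apply cp_minus | apply cp_plus
   | apply cp_mult | apply cp_sq | apply cp_clip ]).

Lemma exR F a b : (forall x, continuity_pt F x) -> ex_RInt F a b.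
Proof. intros H. apply (@ex_RInt_continuous R_CompleteNormedModule). intros; apply cp_to_c; auto. Qed.

Lemma RInt_minus' F G a b : (forall x, continuity_pt F x) -> (forall x, continuity_pt G x) ->
  RInt (fun x => F x - G x) a b = RInt F a b - RInt G a b.
Proof. intros. apply (RInt_minus F G a b); apply exR; auto. Qed.

Lemma RInt_scal' F k a b : (forall x, continuity_pt F x) ->
  RInt (fun x => k * F x) a b = k * RInt F a b.
Proof. intros. apply (RInt_scal F a b k); apply exR; auto. Qed.

Lemma RInt_Chasles' F a b c : (forall x, continuity_pt F x) ->
  RInt F a b + RInt F b c = RInt F a c.
Proof. intros. apply (RInt_Chasles F a b c); apply exR; auto. Qed.

Lemma RInt_le' F G a b : a <= b -> (forall x, continuity_pt F x) -> (forall x, continuity_pt G x) ->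
  (forall x, a < x < b -> F x <= G x) -> RInt F a b <= RInt G a b.
Proof. intros. apply RInt_le; auto; apply exR; auto. Qed.

Lemma RInt_ge0' F a b : a <= b -> (forall x, continuity_pt F x) ->
  (forall x, a < x < b -> 0 <= F x) -> 0 <= RInt F a b.
Proof. intros. apply RInt_ge_0; auto; apply exR; auto. Qed.

Lemma RInt_gt0' F a b : a < b -> (forall x, continuity_pt F x) ->
  (forall x, a < x < b -> 0 < F x) -> 0 < RInt F a b.
Proof. intros. apply RInt_gt_0; auto. intros; apply cp_to_c; auto. Qed.

Lemma deriv0_contra (phi : R -> R) t0 sg c s1 : is_derive phi t0 0 -> (sg = 1 \/ sg = -1) ->
  0 < c -> 0 < s1 -> (forall s, 0 < s < s1 -> c * s <= phi (t0 + sg * s) - phi t0) -> False.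
Proof.
  intros Hd Hsg Hc Hs1 H. apply is_derive_Reals in Hd.
  destruct (Hd c Hc) as [d Hdd].
  set (s := Rmin d s1 / 2).
  assert (Hs : 0 < s < s1). { unfold s. pose proof (cond_pos d). unfold Rmin; destruct Rle_dec; lra. }
  assert (Hsd : s < d). { unfold s. pose proof (cond_pos d). unfold Rmin; destruct Rle_dec; lra. }
  specialize (H s Hs).
  assert (Hne : sg * s <> 0) by (destruct Hsg as [->| ->]; lra).
  assert (Hab : Rabs (sg * s) < d) by (destruct Hsg as [->| ->]; unfold Rabs; destruct Rcase_abs; lra).
  specialize (Hdd (sg * s) Hne Hab).
  rewrite Rminus_0_r in Hdd.
  destruct Hsg as [-> | ->].
  - rewrite Rmult_1_l in *. apply Rabs_def2 in Hdd. destruct Hdd as [Hdd _].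
    apply (Rmult_lt_compat_r s) in Hdd; [|lra]. unfold Rdiv in Hdd.
    rewrite Rmult_assoc, Rinv_l in Hdd by lra. lra.
  - apply Rabs_def2 in Hdd. destruct Hdd as [_ Hdd].
    apply (Rmult_lt_compat_r s) in Hdd; [|lra]. unfold Rdiv in Hdd.
    replace ((phi (t0 + -1 * s) - phi t0) * / (-1 * s) * s) with (- (phi (t0 + -1 * s) - phi t0)) in Hdd
      by (field; lra). lra.
Qed.

Lemma last_point (k : R -> R) a b : a < b -> (forall x, continuity_pt k x) -> 0 < k b ->
  (exists x, a < x < b /\ k x <= 0) ->
  exists x0, a < x0 < b /\ k x0 <= 0 /\ forall x, x0 < x <= b -> 0 < k x.
Proof.
  intros Hab Hk Hb [x1 [Hx1 Hkx1]].
  set (E := fun x => a <= x <= b /\ k x <= 0).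
  destruct (completeness E) as [m [Hub Hlub]].
  { exists b. intros z [Hz _]. lra. }
  { exists x1. split; [lra|auto]. }
  assert (Hm1 : x1 <= m) by (apply Hub; split; [lra|auto]).
  assert (Hm2 : m <= b) by (apply Hlub; intros z [Hz _]; lra).
  assert (Hkm : k m <= 0).
  { destruct (Rle_dec (k m) 0) as [|Hn]; auto. exfalso.
    destruct (cont_eps k m (k m) (Hk m)) as [d [Hd Hdd]]; [lra|].
    assert (m <= m - d). { apply Hlub. intros z [Hz1 Hz2].
      destruct (Rle_dec z (m - d)); auto.
      assert (z <= m) by (apply Hub; split; auto).
      assert (Rabs (z - m) < d) by (unfold Rabs; destruct Rcase_abs; lra).
      specialize (Hdd z H0). unfold Rabs in Hdd; destruct Rcase_abs in Hdd; lra. }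
    lra. }
  exists m. split; [split; [lra|]|split; auto].
  { destruct (Req_dec m b); [subst; lra|lra]. }
  intros y Hy. destruct (Rlt_dec 0 (k y)) as [|Hn]; auto.
  assert (y <= m) by (apply Hub; split; [lra|lra]). lra.
Qed.

Lemma core1 a b (g p phi : R -> R) th sg : a < b ->
  (forall x, continuity_pt g x) -> (forall x, continuity_pt p x) ->
  (forall x, a < x < b -> 0 < p x) ->
  (forall t, phi t = RInt (fun x => (g x + (t - th)) ^ 2 * p x) a b) ->
  is_derive phi th 0 -> (sg = 1 \/ sg = -1) ->
  (forall x, a < x < b -> 0 < sg * g x) -> False.
Proof.
  intros Hab Hg Hp Hpp Hphi Hd Hsg Hpos.
  set (K := RInt (fun x => sg * g x * p x) a b).
  assert (HK : 0 < K). { apply RInt_gt0'; auto. intros; cont. intros x Hx.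
    specialize (Hpos x Hx); specialize (Hpp x Hx). nra. }
  apply (deriv0_contra phi th sg K 1 Hd Hsg HK Rlt_0_1).
  intros s Hs. rewrite !Hphi.
  rewrite <- RInt_minus' by (intros; cont).
  rewrite <- (Rmult_comm s), <- (Rmult_1_l (s * K)).
  eapply Rle_trans with (RInt (fun x => s * (sg * g x * p x)) a b).
  { rewrite RInt_scal' by (intros; cont). unfold K. lra. }
  apply RInt_le'; try lra; try (intros; cont; fail).
  intros x Hx. specialize (Hpp x Hx).
  replace (th + sg * s - th) with (sg * s) by ring. replace (th - th) with 0 by ring.
  specialize (Hpos x Hx).
  assert (0 <= s * (sg * g x) * p x) by (apply Rmult_le_pos; [apply Rmult_le_pos|]; lra).
  assert (0 <= s * s * p x) by (apply Rmult_le_pos; nra).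
  destruct Hsg as [-> | ->]; nra.
Qed.

Lemma abs_lt_iff x d : Rabs x < d <-> - d < x < d.
Proof. unfold Rabs; destruct Rcase_abs; split; intros; lra. Qed.

Lemma Rmin_facts x y : Rmin x y <= x /\ Rmin x y <= y /\ (Rmin x y = x \/ Rmin x y = y).
Proof. unfold Rmin; destruct Rle_dec; lra. Qed.

Lemma strip a b (g : R -> R) w th sg y eps : a < b -> 0 < w -> (forall x, continuity_pt g x) ->
  (sg = 1 \/ sg = -1) -> a < y < b -> 0 < w * y + th < 1 ->
  (forall x, a < x < b -> 0 < w * x + th < 1 -> 0 <= sg * g x) -> 0 < eps ->
  exists eta, 0 < eta /\ forall x, a < x < b ->
    ((sg = 1 /\ - eta < w * x + th <= 0) \/ (sg = -1 /\ 1 <= w * x + th < 1 + eta)) ->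
    - eps <= sg * g x.
Proof.
  intros Hab Hw Hg Hsg Hy Huy Hin He.
  destruct Hsg as [-> | ->].
  - destruct (Rle_dec 0 (w * a + th)) as [Ha|Ha].
    + exists 1. split; [lra|]. intros x Hx [[_ H]|[H _]]; [|lra]. nra.
    + set (e := - th / w). assert (Hee : w * e + th = 0) by (unfold e; field; lra).
      assert (Hae : a < e) by nra. assert (Hey : e < y) by nra.
      destruct (cont_eps g e (eps/2) (Hg e)) as [d0 [Hd0 Hd]]; [lra|].
      exists (w * d0). split; [nra|].
      set (x' := e + Rmin d0 (y - e) / 2).
      destruct (Rmin_facts d0 (y - e)) as [M1 [M2 M3]].
      assert (Hx'1 : e < x' < y) by (unfold x'; destruct M3 as [M|M]; rewrite M in *; lra).
      assert (Hx'2 : x' - e < d0) by (unfold x'; destruct M3 as [M|M]; rewrite M in *; lra).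
      assert (Hgx' : 0 <= 1 * g x'). { apply Hin; [lra|]. split; nra. }
      intros x Hx [[_ Hu]|[H _]]; [|lra].
      assert (Hxe : - d0 < x - e <= 0) by nra.
      assert (A1 : Rabs (g x - g e) < eps/2) by (apply Hd; apply abs_lt_iff; lra).
      assert (A2 : Rabs (g x' - g e) < eps/2) by (apply Hd; apply abs_lt_iff; lra).
      apply abs_lt_iff in A1; apply abs_lt_iff in A2. lra.
  - destruct (Rle_dec (w * b + th) 1) as [Hb|Hb].
    + exists 1. split; [lra|]. intros x Hx [[H _]|[_ H]]; [lra|]. nra.
    + set (e := (1 - th) / w). assert (Hee : w * e + th = 1) by (unfold e; field; lra).
      assert (Hae : e < b) by nra. assert (Hey : y < e) by nra.
      destruct (cont_eps g e (eps/2) (Hg e)) as [d0 [Hd0 Hd]]; [lra|].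
      exists (w * d0). split; [nra|].
      set (x' := e - Rmin d0 (e - y) / 2).
      destruct (Rmin_facts d0 (e - y)) as [M1 [M2 M3]].
      assert (Hx'1 : y < x' < e) by (unfold x'; destruct M3 as [M|M]; rewrite M in *; lra).
      assert (Hx'2 : e - x' < d0) by (unfold x'; destruct M3 as [M|M]; rewrite M in *; lra).
      assert (Hgx' : 0 <= -1 * g x'). { apply Hin; [lra|]. split; nra. }
      intros x Hx [[H _]|[_ Hu]]; [lra|].
      assert (Hxe : 0 <= x - e < d0) by nra.
      assert (A1 : Rabs (g x - g e) < eps/2) by (apply Hd; apply abs_lt_iff; lra).
      assert (A2 : Rabs (g x' - g e) < eps/2) by (apply Hd; apply abs_lt_iff; lra).
      apply abs_lt_iff in A1; apply abs_lt_iff in A2. lra.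
Qed.

Lemma core2 a b (g p phi : R -> R) v w th sg y : a < b -> 0 < v -> 0 < w ->
  (forall x, continuity_pt g x) -> (forall x, continuity_pt p x) ->
  (forall x, a < x < b -> 0 < p x) -> (forall x, 0 <= p x) ->
  (forall t, phi t = RInt (fun x => (g x + v * (clip (w * x + t) - clip (w * x + th))) ^ 2 * p x) a b) ->
  is_derive phi th 0 -> (sg = 1 \/ sg = -1) -> a < y < b -> 0 < w * y + th < 1 -> 0 < sg * g y ->
  (forall x, a < x < b -> 0 < w * x + th < 1 -> 0 <= sg * g x) -> False.
Proof.
  intros Hab Hv Hw Hg Hp Hpp Hp0 Hphi Hd Hsg Hy Huy Hgy Hin.
  assert (Hsg2 : sg * sg = 1) by (destruct Hsg as [-> | ->]; lra).
  destruct (cont_eps g y (sg * g y) (Hg y) Hgy) as [d0 [Hd0 Hcy]].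
  set (uy := w * y + th).
  set (del := Rmin (Rmin d0 (y - a)) (Rmin (b - y) (Rmin (uy / w) ((1 - uy) / w))) / 2).
  assert (Hq1 : uy / w * w = uy) by (field; lra).
  assert (Hq2 : (1 - uy) / w * w = 1 - uy) by (field; lra).
  assert (Hdel : 0 < del /\ del < d0 /\ del < y - a /\ del < b - y /\ w * del < uy /\ w * del < 1 - uy).
  { unfold del.
    destruct (Rmin_facts d0 (y - a)) as [M1 [M2 M3]].
    destruct (Rmin_facts (uy / w) ((1 - uy) / w)) as [N1 [N2 N3]].
    destruct (Rmin_facts (b - y) (Rmin (uy / w) ((1 - uy) / w))) as [O1 [O2 O3]].
    destruct (Rmin_facts (Rmin d0 (y - a)) (Rmin (b - y) (Rmin (uy / w) ((1 - uy) / w)))) as [P1 [P2 P3]].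
    assert (0 < uy / w) by (apply Rdiv_lt_0_compat; [unfold uy; lra|lra]).
    assert (0 < (1 - uy) / w) by (apply Rdiv_lt_0_compat; [unfold uy; lra|lra]).
    set (m := Rmin (Rmin d0 (y - a)) (Rmin (b - y) (Rmin (uy / w) ((1 - uy) / w)))) in *.
    assert (0 < m) by (destruct P3 as [P|P]; rewrite P; [destruct M3 as [M|M]|destruct O3 as [O|O]; [|destruct N3 as [N|N]]]; rewrite ?M, ?O, ?N; lra).
    assert (m / 2 * w < uy / w * w) by (apply Rmult_lt_compat_r; lra).
    assert (m / 2 * w < (1 - uy) / w * w) by (apply Rmult_lt_compat_r; lra).
    repeat split; nra. }
  destruct Hdel as [Hdel0 [Hdel1 [Hdel2 [Hdel3 [Hdel4 Hdel5]]]]].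
  set (K := RInt (fun x => sg * g x * p x) (y - del) (y + del) : R).
  assert (HK : 0 < K).
  { apply RInt_gt0'; [lra| intros; cont |]. intros x Hx.
    assert (Rabs (g x - g y) < sg * g y) by (apply Hcy; apply abs_lt_iff; lra).
    apply abs_lt_iff in H. assert (0 < p x) by (apply Hpp; lra).
    apply Rmult_lt_0_compat; auto. destruct Hsg as [-> | ->]; lra. }
  set (P := RInt p a b : R).
  assert (HP : 0 <= P) by (apply RInt_ge0'; [lra|auto|intros; apply Hp0]).
  set (eps := K / (2 * (P + 1))).
  assert (Heps : 0 < eps) by (unfold eps; apply Rdiv_lt_0_compat; lra).
  assert (HepsP : eps * P <= K / 2).
  { unfold eps. replace (K / (2 * (P + 1)) * P) with (K / 2 * (P / (P + 1))) by (field; lra).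
    assert (P / (P + 1) <= 1). { replace (P / (P + 1)) with (1 - / (P + 1)) by (field; lra). assert (0 < / (P + 1)) by (apply Rinv_0_lt_compat; lra). lra. }
    assert (0 <= P / (P + 1)) by (apply Rdiv_le_0_compat; lra). nra. }
  destruct (strip a b g w th sg y eps Hab Hw Hg Hsg Hy Huy Hin Heps) as [eta [Heta Hstrip]].
  set (m1 := uy - w * del). set (m2 := uy + w * del).
  set (s1 := Rmin (Rmin 1 eta) (Rmin m1 (1 - m2))).
  assert (Hs1 : 0 < s1 /\ s1 <= 1 /\ s1 <= eta /\ s1 <= m1 /\ s1 <= 1 - m2).
  { unfold s1. destruct (Rmin_facts 1 eta) as [M1 [M2 M3]].
    destruct (Rmin_facts m1 (1 - m2)) as [N1 [N2 N3]].
    destruct (Rmin_facts (Rmin 1 eta) (Rmin m1 (1 - m2))) as [O1 [O2 O3]].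
    repeat split; try lra.
    destruct O3 as [O|O]; rewrite O; [destruct M3 as [M|M]|destruct N3 as [N|N]]; rewrite ?M, ?N; unfold m1, m2; lra. }
  destruct Hs1 as [Hs10 [Hs11 [Hs12 [Hs13 Hs14]]]].
  apply (deriv0_contra phi th sg (v * K) s1 Hd Hsg); [nra|lra|].
  intros s Hs. rewrite !Hphi.
  set (Dl := fun x => v * (clip (w * x + (th + sg * s)) - clip (w * x + th))).
  assert (HDl : forall x, continuity_pt Dl x) by (intros; unfold Dl; cont).
  set (H := fun x => g x * Dl x * p x + eps * v * s * p x).
  assert (HH : forall x, continuity_pt H x) by (intros; unfold H; cont).
  assert (P1 : forall x, a < x < b -> 0 <= H x).
  { intros x Hx. unfold H, Dl.
    set (u := w * x + th).
    replace (w * x + (th + sg * s)) with (u + sg * s) by (unfold u; ring).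
    destruct (clip_diff sg u s Hsg (proj1 Hs)) as [[D1 D2] D3].
    set (D := sg * (clip (u + sg * s) - clip u)) in *.
    replace (v * (clip (u + sg * s) - clip u)) with (v * sg * D) by (unfold D; rewrite <- Rmult_assoc, (Rmult_assoc v sg sg), Hsg2; ring).
    assert (Hgd : - eps * s <= sg * g x * D).
    { destruct (Req_dec D 0) as [HD|HD]. { rewrite HD; nra. }
      specialize (D3 HD).
      assert (Hg' : - eps <= sg * g x).
      { destruct (Rlt_dec 0 u) as [Hu0|Hu0]; [destruct (Rlt_dec u 1) as [Hu1|Hu1]|].
        - specialize (Hin x Hx (conj Hu0 Hu1)). lra.
        - apply Hstrip; [exact Hx|]. unfold u in *. destruct Hsg as [E|E].
          + pose proof (proj1 D3 E). lra.
          + pose proof (proj2 D3 E). right. split; [exact E|]. lra.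
        - apply Hstrip; [exact Hx|]. unfold u in *. destruct Hsg as [E|E].
          + pose proof (proj1 D3 E). left. split; [exact E|]. lra.
          + pose proof (proj2 D3 E). lra. }
      nra. }
    assert (0 < p x) by auto.
    replace (g x * (v * sg * D) * p x + eps * v * s * p x) with (v * p x * (sg * g x * D + eps * s))
      by ring.
    apply Rmult_le_pos; [nra|lra]. }
  assert (P2 : forall x, y - del < x < y + del -> v * s * (sg * g x * p x) <= H x).
  { intros x Hx. unfold H, Dl.
    assert (m1 < w * x + th < m2) by (unfold m1, m2, uy; nra).
    rewrite (clip_id (w * x + th)) by lra. rewrite clip_id by (destruct Hsg as [-> | ->]; lra).
    assert (0 <= eps * v * s * p x) by (apply Rmult_le_pos; [|auto]; apply Rmult_le_pos; [|lra]; apply Rmult_le_pos; lra).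
    replace (g x * (v * (w * x + (th + sg * s) - (w * x + th))) * p x) with (v * s * (sg * g x * p x)) by ring.
    lra. }
  assert (HIg : RInt (fun x => g x * Dl x * p x) a b = RInt H a b - eps * v * s * P).
  { unfold P. rewrite <- RInt_scal' by auto. rewrite <- RInt_minus' by (intros; unfold H; cont).
    apply RInt_ext. intros. unfold H. change (g x * Dl x * p x = g x * Dl x * p x + eps * v * s * p x - eps * v * s * p x :> R). ring. }
  assert (HIH : v * s * K <= RInt H a b).
  { rewrite <- (RInt_Chasles' H a (y - del) b) by auto.
    rewrite <- (RInt_Chasles' H (y - del) (y + del) b) by auto.
    assert (0 <= RInt H a (y - del)) by (apply RInt_ge0'; auto; [lra|intros; apply P1; lra]).
    assert (0 <= RInt H (y + del) b) by (apply RInt_ge0'; auto; [lra|intros; apply P1; lra]).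
    assert (v * s * K <= RInt H (y - del) (y + del)).
    { unfold K. rewrite <- RInt_scal' by (intros; cont).
      apply RInt_le'; auto; [lra|intros; cont]. }
    lra. }
  rewrite <- RInt_minus' by (intros; cont).
  apply Rle_trans with (RInt (fun x => 2 * (g x * Dl x * p x)) a b).
  { rewrite RInt_scal' by (intros; cont). rewrite HIg.
    assert (0 <= v * s) by nra.
    assert (v * s * (eps * P) <= v * s * (K / 2)) by (apply Rmult_le_compat_l; auto).
    nra. }
  apply RInt_le'; [lra|intros; cont|intros; cont|].
  intros x Hx. unfold Dl. rewrite Rminus_diag, Rmult_0_r, Rplus_0_r.
  assert (0 <= p x) by auto.
  set (q := v * (clip (w * x + (th + sg * s)) - clip (w * x + th))).
  assert (0 <= q * q * p x) by (apply Rmult_le_pos; nra).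
  nra.
Qed.

Lemma RInt_ext' (F G : R -> R) a b : a <= b -> (forall x, a < x < b -> F x = G x) -> RInt F a b = RInt G a b.
Proof. intros Hab H. apply RInt_ext. rewrite Rmin_left, Rmax_right by lra. intros; apply H; auto. Qed.

Lemma sum1_nonneg h g : (forall i, (1 <= i <= h)%nat -> 0 <= g i) -> 0 <= sum1 h g.
Proof. induction h; simpl; intros H; [lra|]. assert (0 <= g (S h)) by (apply H; lia).
  assert (0 <= sum1 h g) by (apply IHh; intros; apply H; lia). lra. Qed.

Lemma psi_iff (w th x : R) : 0 < w ->
  (- (/ w) * th < x <-> 0 < w * x + th) /\ (x < - (/ w) * th + / w <-> w * x + th < 1).
Proof.
  intros Hw. set (q := - (/ w) * th).
  assert (E1 : w * x + th = w * (x - q)) by (unfold q; field; lra).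
  assert (E2 : w * x + th - 1 = w * (x - (q + / w))) by (unfold q; field; lra).
  rewrite E1. split; split; intros; nra.
Qed.

Lemma active_nonneg a b h v w th x : (forall i, (1 <= i <= h)%nat -> 0 < v i) ->
  0 <= active_sum a b h v w th x.
Proof.
  intros Hv. unfold active_sum. apply sum1_nonneg. intros i Hi.
  repeat destruct Rlt_dec; try lra. specialize (Hv i Hi); lra.
Qed.

Theorem corollary2p13
  (a b : R) (hab : a < b) (h : nat) (v w : nat -> R)
  (hv : forall i, (1 <= i <= h)%nat -> 0 < v i)
  (hw : forall i, (1 <= i <= h)%nat -> 0 < w i)
  (f p : R -> R)
  (hf : forall x, continuous f x) (hp : forall x, continuous p x)
  (hp0 : forall x, 0 <= p x)
  (hpsupp : forall x, 0 < p x <-> a < x < b)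
  (hmono : forall x y, x <= y -> f x <= f y)
  (hLip : exists Lf : R,
      (forall x y, a <= x <= b -> a <= y <= b -> x <> y ->
         Rabs (f x - f y) / Rabs (x - y) <= Lf)
      /\ (forall i, (1 <= i <= h)%nat -> Lf < v i * w i))
  (vartheta : nat -> R)
  (hcrit : forall j, (1 <= j <= S h)%nat ->
      is_derive (fun t => risk a b h v w f p (upd vartheta j t)) (vartheta j) 0) :
  Rbar_le
    (Finite (Rmax (realization h v w vartheta b - f b)
                  (f a - realization h v w vartheta a)))
    (Vsup a b h v w vartheta).
Proof.
  clear hLip.
  set (N := realization h v w vartheta).
  set (g := fun x => N x - f x).
  assert (Hf : forall x, continuity_pt f x) by (intros; apply c_to_cp; auto).
  assert (Hp : forall x, continuity_pt p x) by (intros; apply c_to_cp; auto).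
  assert (Hg : forall x, continuity_pt g x) by (intros; unfold g, N; cont).
  assert (Hpp : forall x, a < x < b -> 0 < p x) by (intros; apply hpsupp; auto).
  assert (C1 : forall sg, (sg = 1 \/ sg = -1) -> (forall x, a < x < b -> 0 < sg * g x) -> False).
  { intros sg Hsg Hpos.
    apply (core1 a b g p (fun t => risk a b h v w f p (upd vartheta (S h) t)) (vartheta (S h)) sg
             hab Hg Hp Hpp); auto.
    2: { apply hcrit; lia. }
    intros t. unfold risk. apply RInt_ext'; [lra|]. intros x Hx.
    unfold g, N, realization. unfold upd at 1. rewrite Nat.eqb_refl.
    rewrite (sum1_ext h (fun i => v i * clip (w i * x + upd vartheta (S h) t i))
                        (fun i => v i * clip (w i * x + vartheta i))).
    - ring.
    - intros i Hi. unfold upd. replace (Nat.eqb i (S h)) with false; auto.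
      symmetry; apply Nat.eqb_neq; lia. }
  assert (C2 : forall i sg y, (1 <= i <= h)%nat -> (sg = 1 \/ sg = -1) -> a < y < b ->
             0 < w i * y + vartheta i < 1 -> 0 < sg * g y ->
             (forall x, a < x < b -> 0 < w i * x + vartheta i < 1 -> 0 <= sg * g x) -> False).
  { intros i sg y Hi Hsg Hy Huy Hgy Hin.
    apply (core2 a b g p (fun t => risk a b h v w f p (upd vartheta i t)) (v i) (w i) (vartheta i) sg y
             hab (hv i Hi) (hw i Hi) Hg Hp Hpp hp0); auto.
    2: { apply hcrit; lia. }
    intros t. unfold risk. apply RInt_ext'; [lra|]. intros x Hx.
    unfold g, N, realization. unfold upd at 1.
    replace (Nat.eqb (S h) i) with false by (symmetry; apply Nat.eqb_neq; lia).
    rewrite (sum1_upd h (fun k z => v k * clip (w k * x + z)) vartheta i t Hi).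
    ring. }
  assert (Hub : forall z x, a < x < b -> z <= active_sum a b h v w vartheta x ->
             Rbar_le (Finite z) (Vsup a b h v w vartheta)).
  { intros z x Hx Hz. unfold Vsup.
    destruct (Lub_Rbar_correct (fun y => exists x, a < x < b /\ y = active_sum a b h v w vartheta x)) as [H1 _].
    apply Rbar_le_trans with (Finite (active_sum a b h v w vartheta x)).
    - simpl; auto.
    - apply H1. exists x; split; auto. }
  set (mid := (a + b) / 2).
  assert (Hmid : a < mid < b) by (unfold mid; lra).
  assert (Hact : forall x i, (1 <= i <= h)%nat -> a < x < b ->
     ~ (0 < w i * x + vartheta i < 1) ->
     (match Rlt_dec (psi w vartheta i) x, Rlt_dec x (psi w vartheta i + / w i),
          Rlt_dec a x, Rlt_dec x b with
      | left _, left _, left _, left _ => v i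
      | _, _, _, _ => 0 end) = 0).
  { intros x i Hi Hx Hn. destruct (psi_iff (w i) (vartheta i) x (hw i Hi)) as [P1 P2].
    unfold psi. repeat destruct Rlt_dec; auto. exfalso; apply Hn; split; [apply P1|apply P2]; auto. }
  assert (Hact1 : forall x i, (1 <= i <= h)%nat -> 
     (match Rlt_dec (psi w vartheta i) x, Rlt_dec x (psi w vartheta i + / w i),
          Rlt_dec a x, Rlt_dec x b with
      | left _, left _, left _, left _ => v i
      | _, _, _, _ => 0 end) = v i \/ 
     (match Rlt_dec (psi w vartheta i) x, Rlt_dec x (psi w vartheta i + / w i),
          Rlt_dec a x, Rlt_dec x b with
      | left _, left _, left _, left _ => v i
      | _, _, _, _ => 0 end) = 0).
  { intros. repeat destruct Rlt_dec; auto. }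
  unfold Rmax; destruct Rle_dec as [Hle|Hle].
  -
    destruct (Rle_dec (f a - N a) 0) as [Hn|Hn].
    { apply (Hub _ mid Hmid). pose proof (active_nonneg a b h v w vartheta mid hv). lra. }
    assert (Hga : 0 < - g a) by (unfold g; lra).
    set (k := fun z => - g (- z)).
    assert (Hk : forall z, continuity_pt k z).
    { intros z. unfold k.
      exact (continuity_pt_comp (fun z => - z) (fun t => - g t) z
               (continuity_pt_opp _ _ (cp_id z)) (continuity_pt_opp _ _ (Hg (- z)))). }
    assert (Hka : 0 < k (- a)) by (unfold k; rewrite Ropp_involutive; lra).
    assert (Hex : exists z, - b < z < - a /\ k z <= 0).
    { apply NNPP; intros Hne. apply (C1 (-1)); [right; auto|]. intros x Hx.
      destruct (Rlt_dec 0 (-1 * g x)); [lra|]. exfalso; apply Hne; exists (- x); split; [lra|].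
      unfold k; rewrite Ropp_involutive; lra. }
    destruct (last_point k (- b) (- a) ltac:(lra) Hk Hka Hex) as [z0 [Hz0 [Hkz0 Hneg]]].
    set (x1 := - z0).
    assert (Hx1 : a < x1 < b) by (unfold x1; lra).
    assert (Hgx1 : 0 <= g x1) by (unfold k in Hkz0; unfold x1; lra).
    assert (Hneg' : forall x, a <= x < x1 -> g x < 0).
    { intros x Hx. specialize (Hneg (- x)). unfold k in Hneg. rewrite Ropp_involutive in Hneg.
      assert (0 < - g x) by (apply Hneg; unfold x1 in Hx; lra). lra. }
    apply (Hub _ x1 Hx1).
    assert (HN : N x1 - N a = sum1 h (fun i => v i * clip (w i * x1 + vartheta i) - v i * clip (w i * a + vartheta i)))
      by (unfold N, realization; rewrite sum1_minus; ring).
    assert (HNa : N x1 - N a <= active_sum a b h v w vartheta x1).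
    { rewrite HN. unfold active_sum. apply sum1_le. intros i Hi.
      pose proof (hv i Hi) as Hvi. pose proof (hw i Hi) as Hwi.
      destruct (Classical_Prop.classic (0 < w i * x1 + vartheta i < 1)) as [Hin|Hnin].
      - destruct (Hact1 x1 i Hi) as [E|E]; rewrite E.
        + pose proof (clip_range (w i * a + vartheta i)). pose proof (clip_range (w i * x1 + vartheta i)). nra.
        + exfalso. revert E. unfold psi. destruct (psi_iff (w i) (vartheta i) x1 Hwi) as [P1 P2].
          repeat destruct Rlt_dec; try lra; intros _;
          match goal with Hn0 : ~ _ |- _ => apply Hn0; first [apply P1; lra | apply P2; lra | lra] end.
      - rewrite (Hact x1 i Hi Hx1 Hnin).
        assert (clip (w i * x1 + vartheta i) <= clip (w i * a + vartheta i)).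
        { assert (Hua : w i * a + vartheta i <= w i * x1 + vartheta i) by nra.
          destruct (Rle_dec (w i * x1 + vartheta i) 0).
          - rewrite !clip_0 by lra. lra.
          - assert (Hu1 : 1 <= w i * x1 + vartheta i) by (destruct (Rle_dec 1 (w i * x1 + vartheta i)); auto; exfalso; apply Hnin; lra).
            destruct (Rle_dec 1 (w i * a + vartheta i)).
            + rewrite !clip_1 by lra. lra.
            + exfalso.
              set (e := (1 - vartheta i) / w i). assert (Hee : w i * e + vartheta i = 1) by (unfold e; field; lra).
              assert (He1 : e <= x1) by nra. assert (He2 : a < e) by nra.
              set (y := e - Rmin (e - a) (/ w i) / 2).
              assert (Hwinv : 0 < / w i) by (apply Rinv_0_lt_compat; lra).
              destruct (Rmin_facts (e - a) (/ w i)) as [M1 [M2 M3]].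
              assert (Hy1 : a < y < e) by (unfold y; destruct M3 as [M|M]; rewrite M in *; lra).
              assert (Hy2 : w i * (e - y) <= 1 / 2).
              { assert (e - y <= / w i / 2) by (unfold y; lra).
                assert (HH1 : w i * (e - y) <= w i * (/ w i / 2)) by (apply Rmult_le_compat_l; lra).
                replace (w i * (/ w i / 2)) with (1/2) in HH1 by (field; lra). lra. }
              apply (C2 i (-1) y Hi (or_intror eq_refl)).
              * lra.
              * split; nra.
              * assert (g y < 0) by (apply Hneg'; lra). lra.
              * intros x Hx [_ Hux].
                assert (x < x1) by nra. assert (g x < 0) by (apply Hneg'; lra). lra. }
        nra. }
    assert (f a <= f x1) by (apply hmono; lra).
    unfold g in Hgx1. unfold N in *. lra.
  -
    destruct (Rle_dec (N b - f b) 0) as [Hn|Hn].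
    { apply (Hub _ mid Hmid). pose proof (active_nonneg a b h v w vartheta mid hv). lra. }
    assert (Hgb : 0 < g b) by (unfold g; lra).
    assert (Hex : exists x, a < x < b /\ g x <= 0).
    { apply NNPP; intros Hne. apply (C1 1); [left; auto|]. intros x Hx.
      destruct (Rlt_dec 0 (g x)); [lra|]. exfalso; apply Hne; exists x; split; auto; lra. }
    destruct (last_point g a b hab Hg Hgb Hex) as [x0 [Hx0 [Hgx0 Hpos]]].
    apply (Hub _ x0 Hx0).
    assert (HN : N b - N x0 = sum1 h (fun i => v i * clip (w i * b + vartheta i) - v i * clip (w i * x0 + vartheta i)))
      by (unfold N, realization; rewrite sum1_minus; ring).
    assert (HNa : N b - N x0 <= active_sum a b h v w vartheta x0).
    { rewrite HN. unfold active_sum. apply sum1_le. intros i Hi.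
      pose proof (hv i Hi) as Hvi. pose proof (hw i Hi) as Hwi.
      destruct (Classical_Prop.classic (0 < w i * x0 + vartheta i < 1)) as [Hin|Hnin].
      - destruct (Hact1 x0 i Hi) as [E|E]; rewrite E.
        + pose proof (clip_range (w i * b + vartheta i)). pose proof (clip_range (w i * x0 + vartheta i)). nra.
        + exfalso. revert E. unfold psi. destruct (psi_iff (w i) (vartheta i) x0 Hwi) as [P1 P2].
          repeat destruct Rlt_dec; try lra; intros _;
          match goal with Hn0 : ~ _ |- _ => apply Hn0; first [apply P1; lra | apply P2; lra | lra] end.
      - rewrite (Hact x0 i Hi Hx0 Hnin).
        assert (clip (w i * b + vartheta i) <= clip (w i * x0 + vartheta i)).
        { assert (Hub0 : w i * x0 + vartheta i <= w i * b + vartheta i) by nra.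
          destruct (Rle_dec 1 (w i * x0 + vartheta i)).
          - rewrite !clip_1 by lra. lra.
          - assert (Hu0 : w i * x0 + vartheta i <= 0) by (destruct (Rle_dec (w i * x0 + vartheta i) 0); auto; exfalso; apply Hnin; lra).
            destruct (Rle_dec (w i * b + vartheta i) 0).
            + rewrite !clip_0 by lra. lra.
            + exfalso.
              set (e := - vartheta i / w i). assert (Hee : w i * e + vartheta i = 0) by (unfold e; field; lra).
              assert (He1 : x0 <= e) by nra. assert (He2 : e < b) by nra.
              set (y := e + Rmin (b - e) (/ w i) / 2).
              assert (Hwinv : 0 < / w i) by (apply Rinv_0_lt_compat; lra).
              destruct (Rmin_facts (b - e) (/ w i)) as [M1 [M2 M3]].
              assert (Hy1 : e < y < b) by (unfold y; destruct M3 as [M|M]; rewrite M in *; lra).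
              assert (Hy2 : w i * (y - e) <= 1 / 2).
              { assert (y - e <= / w i / 2) by (unfold y; lra).
                assert (HH1 : w i * (y - e) <= w i * (/ w i / 2)) by (apply Rmult_le_compat_l; lra).
                replace (w i * (/ w i / 2)) with (1/2) in HH1 by (field; lra). lra. }
              apply (C2 i 1 y Hi (or_introl eq_refl)).
              * lra.
              * split; nra.
              * rewrite Rmult_1_l. apply Hpos. lra.
              * intros x Hx [Hux _]. rewrite Rmult_1_l.
                assert (x0 < x) by nra. left; apply Hpos; lra. }
        nra. }
    assert (f x0 <= f b) by (apply hmono; lra).
    unfold g in Hgx0. unfold N in *. lra.
Qed.
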